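(* Let $G=(V,E)$ be a strongly connected digraph and $s\in V$. Let $e=(u,v)\in E$ with $T(u)\neq T(v)$, and let $r_v$ be the root of $T(v)$. Then either $u=d(v)$ and $e$ is a bridge of $G(s)$, or $u$ is a proper descendant of $r_v$ in $D(s)$.
   Context: For a digraph $G=(V,E)$ and $s\in V$ with every vertex reachable from $s$, $G(s)$ is the flow graph with start vertex $s$; $u$ dominates $w$ if every path from $s$ to $w$ contains $u$; the dominator tree $D(s)$ is the rooted tree on $V$ with root $s$ in which $u$ is an ancestor of $w$ iff $u$ dominates $w$; $d(w)$ is the parent of $w\neq s$. An edge $(u,w)$ is a bridge of $G(s)$ if every path from $s$ to $w$ contains it (then $u=d(w)$). A vertex $w\neq s$ is marked if $(d(w),w)$ is a bridge of $G(s)$. Deleting from $D(s)$ all edges $(d(w),w)$ with $w$ marked decomposes $D(s)$ into a forest of subtrees, each rooted at $s$ or at a marked vertex; $T(v)$ denotes the subtree containing $v$, and $r_v$ its root. *)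

(* Defs.v *)
From mathcomp Require Import all_boot.
Set Implicit Arguments. Unset Strict Implicit. Unset Printing Implicit Defensive.

Section Dom.
Variables (V : finType) (E : rel V) (s : V).

Definition spath (p : seq V) (w : V) : Prop := path E s p /\ last s p = w.

Definition dominates (u w : V) : Prop :=
  forall p, spath p w -> u \in s :: p.

Definition path_edges (p : seq V) : seq (V * V) := zip (s :: p) p.

Definition bridge (u w : V) : Prop :=
  E u w /\ forall p, spath p w -> (u, w) \in path_edges p.

(* d w = x: x is the parent of w <> s in the dominator tree D(s),
   i.e. the immediate dominator of w. *)
Definition idom (x w : V) : Prop :=
  w <> s /\ dominates x w /\ x <> w /\
  forall y, dominates y w -> y <> w -> dominates y x.

Definition marked (w : V) : Prop :=
  w <> s /\ exists x, idom x w /\ bridge x w.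

(* r is the root r_v of the subtree T(v): r is an ancestor of v in D(s)
   (i.e. r dominates v), r is s or marked, and no marked vertex lies on
   the D(s)-path strictly between r and v (every marked ancestor of v is
   an ancestor of r). *)
Definition tree_root (v r : V) : Prop :=
  dominates r v /\ (r = s \/ marked r) /\
  forall x, marked x -> dominates x v -> dominates x r.

End Dom.

(* Main.v *)
From Stdlib Require Import Classical.
Require Import Defs.
From mathcomp Require Import all_boot.

Section L.
Variables (V : finType) (E : rel V) (s : V).

Lemma dom_s_only y : dominates E s y s -> y = s.
Proof.
move=> H; have := H [::] (conj (erefl true) (erefl s)).
by rewrite inE => /eqP.
Qed.

Lemma dom_refl w : dominates E s w w.
Proof. by move=> p [_ <-]; apply: mem_last. Qed.

Lemma dom_edge u v y : E u v -> dominates E s y v -> y <> v -> dominates E s y u.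
Proof.
move=> Huv Hd Hne p [Hp Hl].
have : spath E s (rcons p v) v.
  split; last by rewrite last_rcons.
  by rewrite rcons_path Hp Hl Huv.
move/Hd; rewrite -rcons_cons mem_rcons in_cons => /orP [/eqP //|//].
Qed.

Lemma dom_antisym a b : connect E s a ->
  dominates E s a b -> dominates E s b a -> a = b.
Proof.
move=> /connectP [p0 Hp0 Hl0] Hab Hba.
case: (shortenP Hp0) Hl0 => p Hp Hu _ Hl.
have := Hba p (conj Hp (esym Hl)).
rewrite in_cons => /orP [/eqP Hbs|].
  by move: Hab; rewrite Hbs => /dom_s_only.
move=> Hbp; move: Hp Hu Hl; case/splitPr: Hbp => p1 p2 Hp Hu Hl.
move: Hp; rewrite cat_path => /andP [Hp1 Hp2].
have Hb : spath E s (rcons p1 b) b.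
  split; last by rewrite last_rcons.
  rewrite rcons_path Hp1 /=; by case/andP: Hp2.
have Ha : a \in b :: p2 by rewrite Hl last_cat /=; apply: mem_last.
have := Hab _ Hb.
rewrite -rcons_cons mem_rcons in_cons => /orP [/eqP //|Ha1].
move: Hu; rewrite -cat_cons cat_uniq => /and3P [_ /hasP Hh _].
by exfalso; apply: Hh; exists a.
Qed.

Lemma zip_last_edge x v (a : V) p : v \notin p ->
  (x, v) \in zip (a :: rcons p v) (rcons p v) -> x = last a p.
Proof.
elim: p a => [|b p IH] a /=.
  by move=> _; rewrite inE => /eqP [].
rewrite in_cons negb_or => /andP [Hvb Hvp].
rewrite in_cons => /orP [/eqP [_ Hv]|H].
  by rewrite Hv eqxx in Hvb.
exact: IH.
Qed.

End L.

Theorem mainTheorem6 (V : finType) (E : rel V) (s : V)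
  (Hsc : forall x y : V, connect E x y)
  (u v : V) (He : E u v) (ru rv : V)
  (Hru : tree_root E s u ru) (Hrv : tree_root E s v rv)
  (Hneq : ru <> rv) :
  (idom E s u v /\ bridge E s u v) \/
  (dominates E s rv u /\ u <> rv).
Proof.
case: Hrv => Drv [Rv Mv]; case: Hru => Dru [Ru Mu].
case: (eqVneq rv v) => Hrvv; last first.
  right; split; first by apply: (@dom_edge V E s u v rv He Drv); apply/eqP.
  move=> Heq; subst u.
  case: Rv => [Hs|Hm].
    by apply: Hneq; move: Dru; rewrite Hs; apply: (@dom_s_only V E s).
  apply: Hneq; apply: (@dom_antisym V E s ru _ (Hsc s ru)) => //.
  exact: Mu _ Hm (@dom_refl V E s _).
subst rv.
case: Rv => [Hs|Hm].
  right; split; first by move=> p _; rewrite Hs mem_head.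
  move=> Hus; subst u; apply: Hneq; move: Dru; rewrite Hs; apply: (@dom_s_only V E s).
have Hm' := Hm; case: Hm' => Hvs [x [Hid [_ Hbr]]].
case: (classic (dominates E s v u)) => Hvu.
  right; split => // Huv; subst u.
  apply: Hneq; apply: (@dom_antisym V E s ru _ (Hsc s ru)) => //.
  exact: Mu _ Hm (@dom_refl V E s _).
have [p Hp] := not_all_ex_not _ _ Hvu.
have [Hsp Hnot] := imply_to_and _ _ Hp.
case: Hsp => Hpp Hl.
have Hsv : spath E s (rcons p v) v.
  split; last by rewrite last_rcons.
  by rewrite rcons_path Hpp Hl He.
have Hvp : v \notin p by apply/negP => H; apply: Hnot; rewrite in_cons H orbT.
have := @zip_last_edge V x v s p Hvp (Hbr _ Hsv).
rewrite Hl => Hxu; subst x.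
by left.
Qed.
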